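(* Let $L$ be a ladder gadget and let $S_1,S_2$ be two edge sets in which $L$ is in semi-default state. Then there exists a well-behaved flip sequence $(P_1,P_2,P_3,P_4)$ for $L$ of length exactly 4 starting from $S_1$ such that $S_1\triangle P_1\triangle\cdots\triangle P_4$ agrees with $S_2$ on the edges of $L$; moreover, it can be chosen so that $P_1,P_2$ are both from the top or both from the bottom, and $P_3,P_4$ are both from the top or both from the bottom.
   Context: A ladder gadget is the graph on vertices $\{a_0,\dots,a_6\}\cup\{b_0,\dots,b_6\}$ with edges $\{a_ib_i:1\le i\le 5\}\cup\{a_ia_{i+1},b_ib_{i+1}:0\le i\le 5\}$; its inner vertices are $a_1,\dots,a_5,b_1,\dots,b_5$. $L$ is in semi-default state w.r.t. an edge set $S$ (restricted to $L$'s edges) if $S\cap E(L)$ is a perfect matching of the inner vertices, i.e. none of $a_0a_1,b_0b_1,a_5a_6,b_5b_6$ is in $S$ and every inner vertex is covered exactly once by $S\cap E(L)$ (the boundary vertices $a_0,b_0,a_6,b_6$ being matched outside the gadget). A well-behaved path from the bottom is a path in $L$ that starts with edge $a_0a_1$, ends with edge $b_1b_0$, and whose other vertices are inner; a well-behaved path from the top is a path in $L$ starting with $a_6a_5$, ending with $b_5b_6$, with all other vertices inner. A path is alternating w.r.t. $S$ if its consecutive edges alternate between belonging and not belonging to $S$. A well-behaved flip sequence for $L$ starting from $S$ is a sequence $(P_1,\dots,P_d)$ of well-behaved paths with $P_i$ alternating w.r.t. $S\triangle P_1\triangle\cdots\triangle P_{i-1}$. *)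

(* Defs.v *)
From mathcomp Require Import all_boot.
Set Implicit Arguments. Unset Strict Implicit. Unset Printing Implicit Defensive.

(* Vertices of the ladder gadget: (false, i) = a_i, (true, i) = b_i, i < 7. *)
Definition lvert := (bool * 'I_7)%type.
Definition av (i : nat) : lvert := (false, inord i).
Definition bv (i : nat) : lvert := (true, inord i).

(* Adjacency: rails a_i a_{i+1}, b_i b_{i+1} (0 <= i <= 5) and rungs a_i b_i (1 <= i <= 5). *)
Definition ladj : rel lvert := fun u v =>
  ((u.1 == v.1) && ((u.2.+1 == v.2 :> nat) || (v.2.+1 == u.2 :> nat)))
  || ((u.1 != v.1) && (u.2 == v.2) && (0 < u.2 < 6)).

Definition inner (v : lvert) : bool := 0 < v.2 < 6.

Definition ledge (u v : lvert) : {set lvert} := [set u; v].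
Definition EL : {set {set lvert}} :=
  [set e | [exists u, exists v, ladj u v && (e == ledge u v)]].

Definition semi_default (S : {set {set lvert}}) : Prop :=
  [/\ ledge (av 0) (av 1) \notin S, ledge (bv 0) (bv 1) \notin S,
      ledge (av 5) (av 6) \notin S, ledge (bv 5) (bv 6) \notin S &
      forall v, inner v -> #|[set e in S :&: EL | v \in e]| = 1].

Definition pedges (p : seq lvert) : seq {set lvert} :=
  [seq ledge x.1 x.2 | x <- zip p (behead p)].
Definition pset (p : seq lvert) : {set {set lvert}} :=
  [set e | e \in pedges p].

Definition lpath (p : seq lvert) : bool :=
  if p is x :: q then path ladj x q && uniq p else false.

Definition wb_bottom (p : seq lvert) : Prop :=
  lpath p /\ exists q, p = [:: av 0, av 1 & q ++ [:: bv 1; bv 0]] /\ all inner q.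
Definition wb_top (p : seq lvert) : Prop :=
  lpath p /\ exists q, p = [:: av 6, av 5 & q ++ [:: bv 5; bv 6]] /\ all inner q.
Definition well_behaved (p : seq lvert) : Prop := wb_bottom p \/ wb_top p.

Definition alternating (S : {set {set lvert}}) (p : seq lvert) : bool :=
  sorted (fun e f => (e \in S) != (f \in S)) (pedges p).

Definition symdiff (A B : {set {set lvert}}) : {set {set lvert}} :=
  (A :\: B) :|: (B :\: A).

Fixpoint wb_flip_seq (S : {set {set lvert}}) (ps : seq (seq lvert)) : Prop :=
  if ps is p :: ps' then
    [/\ well_behaved p, alternating S p & wb_flip_seq (symdiff S (pset p)) ps']
  else True.

Definition apply_flips (S : {set {set lvert}}) (ps : seq (seq lvert)) :=
  foldl (fun T p => symdiff T (pset p)) S ps.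

(* Main.v *)
Require Import Defs.
From mathcomp Require Import all_boot.
Set Implicit Arguments. Unset Strict Implicit. Unset Printing Implicit Defensive.

Definition va (i : nat) : lvert := (false, @Ordinal 7 (i %% 7) (ltn_pmod i (isT : 0 < 7))).
Definition vb (i : nat) : lvert := (true, @Ordinal 7 (i %% 7) (ltn_pmod i (isT : 0 < 7))).
Definition allv : seq lvert :=
  [:: va 0; va 1; va 2; va 3; va 4; va 5; va 6; vb 0; vb 1; vb 2; vb 3; vb 4; vb 5; vb 6].
Definition E17 : seq (lvert * lvert) :=
  [seq (va i, va i.+1) | i <- iota 0 6] ++ [seq (vb i, vb i.+1) | i <- iota 0 6]
  ++ [seq (va i, vb i) | i <- iota 1 5].
Definition sameE (u v : lvert) (e : lvert * lvert) :=
  ((u == e.1) && (v == e.2)) || ((u == e.2) && (v == e.1)).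
Definition idx (u v : lvert) : nat := find (sameE u v) E17.
Definition nbrs (v : lvert) := [seq w <- allv | ladj v w].
Definition zs (p : seq lvert) := zip p (behead p).
Definition pidx (p : seq lvert) := [seq idx x.1 x.2 | x <- zs p].
Definition flip (st : seq bool) (p : seq lvert) :=
  [seq nth false st i != (i \in pidx p) | i <- iota 0 17].
Definition alt (st : seq bool) (p : seq lvert) :=
  sorted (fun i j => nth false st i != nth false st j) (pidx p).
Definition R (S : {set {set lvert}}) (st : seq bool) :=
  forall u v, ladj u v -> (ledge u v \in S) = nth false st (idx u v).
Fixpoint allbits (n : nat) : seq (seq bool) :=
  if n is n'.+1 then map (cons false) (allbits n') ++ map (cons true) (allbits n') else [:: [::]].
Definition cons_ok (bs : seq bool) :=
  [&& ~~ nth false bs (idx (va 0) (va 1)), ~~ nth false bs (idx (vb 0) (vb 1)),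
      ~~ nth false bs (idx (va 5) (va 6)), ~~ nth false bs (idx (vb 5) (vb 6)) &
      all (fun v => inner v ==> (count (fun w => nth false bs (idx v w)) (nbrs v) == 1)) allv].
Definition MB : seq (seq bool) := [:: [:: false; false; false; false; false; false; false; false; false; false; false; false; true; true; true; true; true]; [:: false; false; false; false; true; false; false; false; false; false; true; false; true; true; true; false; false]; [:: false; false; false; true; false; false; false; false; false; true; false; false; true; true; false; false; true]; [:: false; false; true; false; false; false; false; false; true; false; false; false; true; false; false; true; true]; [:: false; false; true; false; true; false; false; false; true; false; true; false; true; false; false; false; false]; [:: false; true; false; false; false; false; false; true; false; false; false; false; false; false; true; true; true]; [:: false; true; false; false; true; false; false; true; false; false; true; false; false; false; true; false; false]; [:: false; true; false; true; false; false; false; true; false; true; false; false; false; false; false; false; true]].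
Definition BOTQ : seq (seq lvert) := [:: [:: va 2; va 3; va 4; va 5; vb 5; vb 4; vb 3; vb 2]; [:: va 2; va 3; va 4; vb 4; vb 3; vb 2]; [:: va 2; va 3; vb 3; vb 2]; [:: va 2; vb 2]; [:: ]].
Definition TOPQ : seq (seq lvert) := [:: [:: va 4; va 3; va 2; va 1; vb 1; vb 2; vb 3; vb 4]; [:: va 4; va 3; va 2; vb 2; vb 3; vb 4]; [:: va 4; va 3; vb 3; vb 4]; [:: va 4; vb 4]; [:: ]].
Definition ROUTES : seq (bool*nat*nat*bool*nat*nat) := [:: (false,4,3,false,3,4); (false,4,4,true,4,3); (true,4,3,true,2,4); (false,4,3,false,2,4); (true,4,3,true,2,1); (false,4,3,false,2,2); (false,4,3,true,4,3); (false,4,3,false,2,1); (false,4,4,true,3,4); (false,4,3,false,3,4); (false,4,4,true,2,4); (true,2,1,true,3,4); (false,4,3,false,2,4); (false,4,3,true,3,4); (false,4,3,false,2,2); (false,4,3,false,2,0); (true,4,2,true,3,4); (false,4,4,true,4,2); (false,4,3,false,3,4); (false,4,3,false,1,4); (false,4,3,false,0,4); (false,4,3,false,1,2); (false,4,3,false,0,2); (false,4,3,false,0,0); (false,4,2,false,3,4); (true,4,3,true,1,2); (false,4,1,false,3,4); (false,4,1,false,1,4); (false,4,1,false,0,4); (false,4,1,false,1,2); (false,4,1,false,0,2); (false,4,1,false,0,0); (true,1,2,true,3,4); (false,4,2,false,3,4); (false,4,0,false,3,4); (false,4,0,false,1,4); (false,4,0,false,0,4); (false,4,0,false,1,2); (false,4,0,false,0,2);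 (false,4,0,false,0,0); (false,2,2,false,3,4); (false,3,4,true,4,3); (false,2,1,false,3,4); (false,2,1,false,1,4); (false,2,1,false,0,4); (false,2,1,false,1,2); (false,2,1,false,0,2); (false,2,1,false,0,0); (false,3,4,true,3,4); (false,2,2,false,3,4); (false,2,0,false,3,4); (false,2,0,false,1,4); (false,2,0,false,0,4); (false,2,0,false,1,2); (false,2,0,false,0,2); (false,2,0,false,0,0); (false,1,2,false,3,4); (false,0,2,false,3,4); (false,0,0,false,3,4); (false,0,0,false,1,4); (false,0,0,false,0,4); (false,0,0,false,1,2); (false,0,0,false,0,2); (false,0,0,false,0,0)].
Definition mk (s : bool) (q : seq lvert) : seq lvert :=
  if s then [:: va 6, va 5 & q ++ [:: vb 5; vb 6]] else [:: va 0, va 1 & q ++ [:: vb 1; vb 0]].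
Definition pth (s : bool) (i : nat) := mk s (nth [::] (if s then TOPQ else BOTQ) i).
Definition qq (s : bool) (i : nat) := nth [::] (if s then TOPQ else BOTQ) i.
Definition wbb (s : bool) (q : seq lvert) := lpath (mk s q) && all inner q.
Definition route (m1 m2 : seq bool) := nth (false,0,0,false,0,0) ROUTES (index m1 MB * 8 + index m2 MB).
Definition good (m1 m2 : seq bool) :=
  let: (s12, i1, i2, s34, i3, i4) := route m1 m2 in
  let st1 := flip m1 (pth s12 i1) in
  let st2 := flip st1 (pth s12 i2) in
  let st3 := flip st2 (pth s34 i3) in
  let st4 := flip st3 (pth s34 i4) in
  [&& wbb s12 (qq s12 i1), wbb s12 (qq s12 i2), wbb s34 (qq s34 i3), wbb s34 (qq s34 i4),
      alt m1 (pth s12 i1), alt st1 (pth s12 i2), alt st2 (pth s34 i3), alt st3 (pth s34 i4)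
    & st4 == m2].

Definition EDG : seq (lvert * lvert) := [seq x <- [seq (u, v) | u <- allv, v <- allv] | ladj x.1 x.2].
Lemma F1c : all (fun e => all (fun f => sameE e.1 e.2 f == (idx e.1 e.2 == idx f.1 f.2)) EDG) EDG.
Proof. by vm_compute. Qed.
Definition INC : seq (seq nat) := [seq map (idx v) (nbrs v) | v <- allv & inner v].
Lemma INCv : INC = [:: [:: 0; 1; 12]; [:: 1; 2; 13]; [:: 2; 3; 14]; [:: 3; 4; 15]; [:: 4; 5; 16]; [:: 12; 6; 7]; [:: 13; 7; 8]; [:: 14; 8; 9]; [:: 15; 9; 10]; [:: 16; 10; 11]].
Proof. by vm_compute. Qed.
Definition cons2 (bs : seq bool) := [&& ~~ nth false bs 0, ~~ nth false bs 5, ~~ nth false bs 6, ~~ nth false bs 11 & all (fun l => count (nth false bs) l == 1) INC].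
Lemma F6c : all (fun bs => cons2 bs ==> (bs \in MB)) (allbits 17).
Proof. rewrite /cons2 INCv. by vm_compute. Qed.
Lemma F2b : all (fun u => all (fun v => ladj u v == ladj v u) allv) allv.
Proof. by vm_compute. Qed.
Lemma F3b : all (fun u => all (fun v => ladj u v ==> (idx u v < 17)
   && sameE u v (nth (va 0, va 0) E17 (idx u v))) allv) allv.
Proof. by vm_compute. Qed.
Lemma F7c : all (fun e => all (fun f => (e.1 == f.1) ==> (idx e.1 e.2 == idx f.1 f.2) ==> (e.2 == f.2)) EDG) EDG.
Proof. by vm_compute. Qed.
Lemma F8b : all (fun m1 => all (fun m2 => good m1 m2) MB) MB.
Proof. by vm_compute. Qed.

Lemma F0 (u : lvert) : u \in allv.
Proof.
case: u => [b [m Hm]].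
do 7 (case: m Hm => [|m] Hm; first by case: b).
by [].
Qed.

Lemma avE i : i < 7 -> av i = va i.
Proof.
move=> Hi; rewrite /av /va; congr pair; apply: val_inj => /=.
by rewrite inordK // modn_small.
Qed.
Lemma bvE i : i < 7 -> bv i = vb i.
Proof.
move=> Hi; rewrite /bv /vb; congr pair; apply: val_inj => /=.
by rewrite inordK // modn_small.
Qed.

Lemma ladj_sym u v : ladj u v = ladj v u.
Proof. by have /allP/(_ u (F0 u))/allP/(_ v (F0 v))/eqP := F2b. Qed.

Lemma F3 u v : ladj u v -> (idx u v < 17) && sameE u v (nth (va 0, va 0) E17 (idx u v)).
Proof. by have /allP/(_ u (F0 u))/allP/(_ v (F0 v))/implyP := F3b. Qed.

Lemma EDGP u v : ladj u v -> (u, v) \in EDG.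
Proof.
move=> H; rewrite /EDG mem_filter /= H /=.
exact: (allpairs_f pair (F0 u) (F0 v)).
Qed.

Lemma F1 u v x y : ladj u v -> ladj x y -> sameE u v (x, y) = (idx u v == idx x y).
Proof.
move=> /EDGP H1 /EDGP H2.
by have /allP/(_ _ H1)/allP/(_ _ H2)/eqP := F1c.
Qed.

Lemma F7 v w w' : ladj v w -> ladj v w' -> idx v w = idx v w' -> w = w'.
Proof.
move=> /EDGP H1 /EDGP H2 E.
have /allP/(_ _ H1)/allP/(_ _ H2) := F7c.
by rewrite /= eqxx E eqxx /= => /eqP.
Qed.

Lemma ledgeC u v : ledge u v = ledge v u.
Proof. by rewrite /ledge setUC. Qed.

Lemma ledge_eq u v x y : (ledge u v == ledge x y) = sameE u v (x, y).
Proof.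
rewrite /sameE /=.
apply/eqP/idP.
  move=> E.
  have Hu : u \in ledge x y by rewrite -E set21.
  have Hv : v \in ledge x y by rewrite -E set22.
  have Hx : x \in ledge u v by rewrite E set21.
  have Hy : y \in ledge u v by rewrite E set22.
  move: Hu Hv Hx Hy; rewrite !inE.
  move=> /orP[/eqP eu|/eqP eu] /orP[/eqP ev|/eqP ev] /orP[/eqP ex|/eqP ex] /orP[/eqP ey|/eqP ey];
    subst; rewrite ?eqxx ?orbT //.
by case/orP=> /andP [/eqP -> /eqP ->] //; rewrite ledgeC.
Qed.

Lemma in_symdiff (e : {set lvert}) A B : (e \in symdiff A B) = ((e \in A) != (e \in B)).
Proof. by rewrite /symdiff !inE; case: (e \in A); case: (e \in B). Qed.

Lemma mem_map_has (T U : eqType) (f : T -> U) x s : (x \in map f s) = has (fun y => x == f y) s.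
Proof. by elim: s => //= y s IH; rewrite in_cons IH. Qed.

Lemma path_zs x q : path ladj x q -> all (fun e => ladj e.1 e.2) (zs (x :: q)).
Proof.
elim: q x => //= y q IH x /andP [H1 H2].
by rewrite H1 /=; apply: IH.
Qed.

Lemma lpath_zs p : lpath p -> all (fun e => ladj e.1 e.2) (zs p).
Proof. by case: p => // x q /andP [H _]; apply: path_zs. Qed.

Lemma EL_char e : e \in EL -> exists u v, ladj u v /\ e = ledge u v.
Proof.
rewrite inE => /existsP [u /existsP [v /andP [H /eqP ->]]].
by exists u, v.
Qed.

Lemma pset_idx p u v : lpath p -> ladj u v -> (ledge u v \in pset p) = (idx u v \in pidx p).
Proof.
move=> /lpath_zs Hp Huv.
rewrite inE /pedges /pidx -/(zs p) !mem_map_has.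
apply: eq_in_has => [[x y]] /= Hin.
have Hxy := allP Hp _ Hin.
by rewrite ledge_eq F1.
Qed.

Lemma flip_corr S st p : R S st -> lpath p -> R (symdiff S (pset p)) (flip st p).
Proof.
move=> HR Hp u v Huv.
rewrite in_symdiff HR // pset_idx //.
have /andP [Hlt _] := F3 Huv.
rewrite /flip (nth_map 0) ?size_iota // nth_iota //.
Qed.

Lemma eq_in_sorted' (T : eqType) (r1 r2 : rel T) (P : pred T) s :
  all P s -> {in P &, r1 =2 r2} -> sorted r1 s = sorted r2 s.
Proof.
case: s => // x s; elim: s x => //= y s IH x /and3P [Px Py Ps] Hr.
rewrite Hr //; congr andb; apply: IH => //; by rewrite /= Py.
Qed.

Lemma alt_corr S st p : R S st -> lpath p -> alternating S p = alt st p.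
Proof.
move=> HR Hp.
rewrite /alternating /alt /pedges /pidx -/(zs p) !sorted_map.
apply: (eq_in_sorted' (lpath_zs Hp)) => [[x y]] [x' y'] /= H1 H2.
by rewrite !HR.
Qed.

Lemma card_inc S v : #|[set e in S :&: EL | v \in e]| = count (fun w => ledge v w \in S) (nbrs v).
Proof.
have Hu : uniq (map (ledge v) (nbrs v)).
  rewrite map_inj_in_uniq ?filter_uniq ?F0u // => w w'.
  rewrite !mem_filter => /andP [H1 _] /andP [H2 _] /eqP.
  by rewrite ledge_eq F1 // => /eqP; apply: F7.
have Eq : [set e in S :&: EL | v \in e] =i [seq e <- map (ledge v) (nbrs v) | e \in S].
  move=> e; rewrite in_set in_setI mem_filter -andbA; congr andb.
  apply/idP/idP.
    case/andP => /EL_char [x [y [Hxy ->]]] Hv.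
    move: Hv; rewrite !inE => /orP [] /eqP ->.
      by apply: map_f; rewrite mem_filter Hxy F0.
    by rewrite ledgeC; apply: map_f; rewrite mem_filter ladj_sym Hxy F0.
  case/mapP => w; rewrite mem_filter => /andP [Hvw _] ->.
  rewrite /ledge !inE eqxx /= andbT.
  by apply/existsP; exists v; apply/existsP; exists w; rewrite Hvw eqxx.
by rewrite (eq_card Eq) (card_uniqP _) ?filter_uniq // size_filter count_map.
Qed.

Lemma allbitsP n bs : size bs = n -> bs \in allbits n.
Proof.
elim: n bs => [|n IH] [|b bs] //= [Hs].
by rewrite mem_cat; case: b; rewrite (mem_map (fun x y => _)) ?IH ?orbT //; move=> x y [].
Qed.

Lemma classify S : semi_default S -> exists2 m, m \in MB & R S m.
Proof.
case => h0 h1 h2 h3 hc.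
set bs := map (fun e => ledge e.1 e.2 \in S) E17.
have HR : R S bs.
  move=> u v Huv; have /andP [Hlt Hs] := F3 Huv.
  have HE : size E17 = 17 by [].
  rewrite /bs (nth_map (va 0, va 0)); last by rewrite HE.
  move: Hs; case: (nth _ E17 _) => x y; rewrite -ledge_eq => /eqP <-.
  by [].
exists bs => //.
have Hs : size bs = 17 by rewrite size_map.
have /allP/(_ bs (allbitsP Hs))/implyP := F6c; apply.
move: h0 h1 h2 h3; rewrite !avE // !bvE // => h0 h1 h2 h3.
have e0 : idx (va 0) (va 1) = 0 by vm_compute.
have e5 : idx (va 5) (va 6) = 5 by vm_compute.
have e6 : idx (vb 0) (vb 1) = 6 by vm_compute.
have e11 : idx (vb 5) (vb 6) = 11 by vm_compute.
have a0 : ladj (va 0) (va 1) by vm_compute.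
have a5 : ladj (va 5) (va 6) by vm_compute.
have a6 : ladj (vb 0) (vb 1) by vm_compute.
have a11 : ladj (vb 5) (vb 6) by vm_compute.
have b0 : nth false bs 0 = false by rewrite -e0 -HR // (negbTE h0).
have b5 : nth false bs 5 = false by rewrite -e5 -HR // (negbTE h2).
have b6 : nth false bs 6 = false by rewrite -e6 -HR // (negbTE h1).
have b11 : nth false bs 11 = false by rewrite -e11 -HR // (negbTE h3).
rewrite /cons2 b0 b5 b6 b11 !andTb.
rewrite /INC all_map all_filter; apply/allP => v _; apply/implyP => Hv /=.
rewrite count_map -(hc v Hv) card_inc.
apply/eqP; apply: eq_in_count => w; rewrite mem_filter => /andP [Hvw _] /=.
by rewrite HR.
Qed.

Lemma wbbT q : wbb true q -> wb_top (mk true q).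
Proof. case/andP => H1 H2; split => //; exists q; rewrite !avE // !bvE //. Qed.
Lemma wbbF q : wbb false q -> wb_bottom (mk false q).
Proof. case/andP => H1 H2; split => //; exists q; rewrite !avE // !bvE //. Qed.
Lemma wbb_lpath s q : wbb s q -> lpath (mk s q).
Proof. by case/andP. Qed.
Lemma wbb_wb s q : wbb s q -> well_behaved (mk s q).
Proof. by case: s => H; [right; apply: wbbT | left; apply: wbbF]. Qed.

Theorem mainTheorem12 (S1 S2 : {set {set lvert}}) :
  semi_default S1 -> semi_default S2 ->
  exists P1 P2 P3 P4 : seq lvert,
    [/\ wb_flip_seq S1 [:: P1; P2; P3; P4],
        apply_flips S1 [:: P1; P2; P3; P4] :&: EL = S2 :&: EL,
        (wb_top P1 /\ wb_top P2) \/ (wb_bottom P1 /\ wb_bottom P2) &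
        (wb_top P3 /\ wb_top P4) \/ (wb_bottom P3 /\ wb_bottom P4)].
Proof.
move=> /classify [m1 Hm1 R1] /classify [m2 Hm2 R2].
have := allP (allP F8b _ Hm1) _ Hm2; rewrite /good.
case: (route m1 m2) => [[[[[s12 i1] i2] s34] i3] i4].
case/andP => W1; case/andP => W2; case/andP => W3; case/andP => W4.
case/andP => A1; case/andP => A2; case/andP => A3; case/andP => A4 /eqP Hfin.
exists (pth s12 i1), (pth s12 i2), (pth s34 i3), (pth s34 i4).
have L1 := wbb_lpath W1; have L2 := wbb_lpath W2.
have L3 := wbb_lpath W3; have L4 := wbb_lpath W4.
have R1' := flip_corr R1 L1.
have R2' := flip_corr R1' L2.
have R3' := flip_corr R2' L3.
have R4' := flip_corr R3' L4.
split.
- rewrite /=; split; first exact: wbb_wb W1.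
    by rewrite (alt_corr R1 L1).
  split; first exact: wbb_wb W2.
    by rewrite (alt_corr R1' L2).
  split; first exact: wbb_wb W3.
    by rewrite (alt_corr R2' L3).
  split; first exact: wbb_wb W4.
    by rewrite (alt_corr R3' L4).
  by [].
- apply/setP => e; rewrite !in_setI.
  case He: (e \in EL); last by rewrite !andbF.
  have [u [v [Huv ->]]] := EL_char He.
  by rewrite !andbT /= R4' // R2 // Hfin.
- by clear -W1 W2; case: s12 W1 W2 => W1 W2; [left; split; apply: wbbT | right; split; apply: wbbF].
- by clear -W3 W4; case: s34 W3 W4 => W3 W4; [left; split; apply: wbbT | right; split; apply: wbbF].
Qed.
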